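(* Let $n\geq 1$, $m=\frac{n^2+n}{2}$, and let $z:\mathbb{R}^n\to\mathbb{R}^m$ be the map $z(x)=\begin{bmatrix}x_1^2 & x_1x_2 & \cdots & x_1x_n & x_2^2 & x_2x_3 & \cdots & x_n^2\end{bmatrix}^\top$ listing all quadratic monomials of $x$; write $w=z(x)$ and $w_\ell$ for its $\ell$-th entry. Let $E=E^\top\in\mathbb{R}^{n\times n}$ be positive definite, $\alpha>0$, and $\mathcal{E}_\alpha=\{x : x^\top E x\leq\alpha^2\}$. Let $p,q\in\{1,\dots,m\}$ be indices such that $w_pw_q=x_i^2x_jx_k$ (as polynomials in $x$) for some $i,j,k\in\{1,\dots,n\}$ with $j\neq k$. Let $S_{pq}=\bar e_p\bar e_q^\top+\bar e_q\bar e_p^\top\in\mathbb{R}^{m\times m}$. Then the following four quadratic constraints hold for all $x\in\mathcal{E}_\alpha$ with $w=z(x)$: (i) with $d=e_j+e_k$ and $W$ equal to either $(e_i^\top E^{-1}e_i)\,dd^\top$ or $(d^\top E^{-1}d)\,e_ie_i^\top$, $$\begin{bmatrix} x\\ w\end{bmatrix}^\top\begin{bmatrix}\alpha^2 W & 0\\ 0 & -S_{pq}\end{bmatrix}\begin{bmatrix} x\\ w\end{bmatrix}\geq 0;$$ (ii) with $d=e_j-e_k$ and $W$ equal to either $(e_i^\top E^{-1}e_i)\,dd^\top$ or $(d^\top E^{-1}d)\,e_ie_i^\top$, $$\begin{bmatrix} x\\ w\end{bmatrix}^\top\begin{bmatrix}\alpha^2 W & 0\\ 0 & S_{pq}\end{bmatrix}\begin{bmatrix}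 x\\ w\end{bmatrix}\geq 0.$$
   Context: $e_1,\dots,e_n$ denote the standard basis vectors of $\mathbb{R}^n$ and $\bar e_1,\dots,\bar e_m$ the standard basis vectors of $\mathbb{R}^m$. The index $i$ may coincide with $j$ or $k$. *)

(* Defs.v *)
From HB Require Import structures.
From mathcomp Require Import all_boot all_order all_algebra.
From mathcomp Require Import mpoly.
Unset Printing Implicit Defensive.
Import Order.TTheory GRing.Theory Num.Theory.
Local Open Scope ring_scope.

Definition zdim (n : nat) : nat := ((n * n + n) %/ 2)%N.

(* The quadratic monomials x_a x_b, a <= b, in the order
   x_1^2, x_1x_2, ..., x_1x_n, x_2^2, x_2x_3, ..., x_n^2 (row-major). *)
Definition zpolys (R : realFieldType) (n : nat) : seq {mpoly R[n]} :=
  flatten [seq [seq ('X_a * 'X_b : {mpoly R[n]}) | b <- filter (fun b : 'I_n => (a <= b)%N) (enum 'I_n)] | a <- enum 'I_n].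

Definition zpoly (R : realFieldType) (n : nat) (l : 'I_(zdim n)) : {mpoly R[n]} :=
  (zpolys R n)`_l.

Definition zmap (R : realFieldType) (n : nat) (x : 'cV[R]_n) : 'cV[R]_(zdim n) :=
  \col_(l < zdim n) (zpoly R n l).@[fun i => x i 0].

Definition ebasis (R : realFieldType) (n : nat) (i : 'I_n) : 'cV[R]_n := delta_mx i 0.

Definition sc (R : realFieldType) (A : 'M[R]_1) : R := A 0 0.

Definition posdef (R : realFieldType) (n : nat) (E : 'M[R]_n) : Prop :=
  E^T = E /\ forall v : 'cV[R]_n, v != 0 -> 0 < sc R (v^T *m E *m v).

Definition Spq (R : realFieldType) (m : nat) (p q : 'I_m) : 'M[R]_m :=
  ebasis R m p *m (ebasis R m q)^T + ebasis R m q *m (ebasis R m p)^T.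

Definition qc (R : realFieldType) (n m : nat) (x : 'cV[R]_n) (w : 'cV[R]_m)
  (alpha : R) (W : 'M[R]_n) (S : 'M[R]_m) : R :=
  sc R ((col_mx x w)^T *m block_mx (alpha ^+ 2 *: W) 0 0 S *m col_mx x w).

Definition W1 (R : realFieldType) (n : nat) (E : 'M[R]_n) (i : 'I_n) (d : 'cV[R]_n) : 'M[R]_n :=
  sc R ((ebasis R n i)^T *m invmx E *m ebasis R n i) *: (d *m d^T).
Definition W2 (R : realFieldType) (n : nat) (E : 'M[R]_n) (i : 'I_n) (d : 'cV[R]_n) : 'M[R]_n :=
  sc R (d^T *m invmx E *m d) *: (ebasis R n i *m (ebasis R n i)^T).

(* Main.v *)
Require Import Defs.
From HB Require Import structures.
From mathcomp Require Import all_boot all_order all_algebra.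
From mathcomp Require Import mpoly.
From mathcomp Require Import ring lra.
Import Order.TTheory GRing.Theory Num.Theory.
Local Open Scope ring_scope.

Section Aux.
Set Implicit Arguments.
Variable R : realFieldType.

Lemma scM (a b : 'M[R]_1) : sc R (a *m b) = sc R a * sc R b.
Proof. by rewrite /sc mxE big_ord1. Qed.
Lemma scD (a b : 'M[R]_1) : sc R (a + b) = sc R a + sc R b.
Proof. by rewrite /sc mxE. Qed.
Lemma scN (a : 'M[R]_1) : sc R (- a) = - sc R a.
Proof. by rewrite /sc mxE. Qed.
Lemma scZ c (a : 'M[R]_1) : sc R (c *: a) = c * sc R a.
Proof. by rewrite /sc mxE. Qed.
Lemma scT (a : 'M[R]_1) : sc R a^T = sc R a.
Proof. by rewrite /sc mxE. Qed.
Lemma sc0 : sc R 0 = 0.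
Proof. by rewrite /sc mxE. Qed.

Lemma dotE n (i : 'I_n) (x : 'cV[R]_n) : sc R ((ebasis R n i)^T *m x) = x i 0.
Proof. by rewrite /ebasis trmx_delta -rowE /sc mxE. Qed.

Lemma dotC n (u v : 'cV[R]_n) : sc R (u^T *m v) = sc R (v^T *m u).
Proof. by rewrite -scT trmx_mul trmxK. Qed.

Definition Bf n (E : 'M[R]_n) (a b : 'cV[R]_n) := sc R (a^T *m E *m b).

Lemma Bf_sym n (E : 'M[R]_n) a b : E^T = E -> Bf E a b = Bf E b a.
Proof. by move=> hs; rewrite /Bf -scT !trmx_mul trmxK hs mulmxA. Qed.

Lemma Bf_linl n (E : 'M[R]_n) a b c y :
  Bf E (a - c *: b) y = Bf E a y - c * Bf E b y.
Proof.
by rewrite /Bf linearB linearZ /= !mulmxBl -!scalemxAl scD scN scZ.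
Qed.

Lemma Bf_linr n (E : 'M[R]_n) a b c y :
  Bf E y (a - c *: b) = Bf E y a - c * Bf E y b.
Proof.
by rewrite /Bf mulmxBr -!scalemxAr scD scN scZ.
Qed.

Lemma Bf_pos n (E : 'M[R]_n) v : posdef R n E -> 0 <= Bf E v v.
Proof.
move=> [_ hp]; have [->|nz] := eqVneq v 0.
  by rewrite /Bf mulmx0 sc0.
exact/ltW/hp.
Qed.

Lemma Bf_CS n (E : 'M[R]_n) a b : posdef R n E ->
  Bf E a b ^+ 2 <= Bf E a a * Bf E b b.
Proof.
move=> hE; have [->|nz] := eqVneq b 0.
  rewrite {1}/Bf mulmx0 sc0 expr0n /=.
  by rewrite mulr_ge0 // Bf_pos.
have hb : 0 < Bf E b b by case: hE => _ hp; exact: hp.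
set c := Bf E a b / Bf E b b.
have := Bf_pos (a - c *: b) hE.
move=> h; rewrite Bf_linl !Bf_linr (Bf_sym b a hE.1) in h.
have e : Bf E a a - c * Bf E a b - c * (Bf E a b - c * Bf E b b)
   = Bf E a a - Bf E a b ^+ 2 / Bf E b b.
  by rewrite /c; field; rewrite gt_eqF.
rewrite e subr_ge0 ler_pdivrMr // in h.
Qed.

Lemma unit_posdef n (E : 'M[R]_n) : posdef R n E -> E \in unitmx.
Proof.
move=> [_ hp]; rewrite -row_free_unit; apply: inj_row_free => u hu.
apply/eqP; apply: contraT => nz.
have nz' : u^T != 0 by apply: contra nz => /eqP h; rewrite -(trmxK u) h linear0.
have := hp _ nz'; by rewrite trmxK hu mul0mx sc0 ltxx.
Qed.

Lemma CS_ell n (E : 'M[R]_n) (alpha : R) (x v : 'cV[R]_n) :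
  posdef R n E -> sc R (x^T *m E *m x) <= alpha ^+ 2 ->
  0 <= sc R (v^T *m invmx E *m v) /\
  sc R (v^T *m x) ^+ 2 <= alpha ^+ 2 * sc R (v^T *m invmx E *m v).
Proof.
move=> hE hx; have hU := unit_posdef hE.
have hinvT : (invmx E)^T = invmx E by rewrite trmx_inv hE.1.
set u := invmx E *m v.
have e1 : Bf E u x = sc R (v^T *m x).
  by rewrite /Bf /u trmx_mul hinvT -(mulmxA v^T (invmx E) E) (mulVmx hU) mulmx1.
have e2 : Bf E u u = sc R (v^T *m invmx E *m v).
  rewrite /Bf /u trmx_mul hinvT -(mulmxA v^T (invmx E) E) (mulVmx hU) mulmx1.
  by rewrite mulmxA.
have p := Bf_pos u hE; rewrite e2 in p; split => //.
have := Bf_CS u x hE; rewrite e1 e2 => h.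
apply: (le_trans h); rewrite mulrC; apply: ler_wpM2r => //.
Qed.

Lemma qcE n m (x : 'cV[R]_n) (w : 'cV[R]_m) a W S :
  qc R n m x w a W S = a ^+ 2 * sc R (x^T *m W *m x) + sc R (w^T *m S *m w).
Proof.
rewrite /qc tr_col_mx mul_row_block mul_row_col !mulmx0 addr0 add0r.
by rewrite scD -scalemxAr -scalemxAl scZ.
Qed.

Lemma quadW n (x d : 'cV[R]_n) c :
  sc R (x^T *m (c *: (d *m d^T)) *m x) = c * sc R (d^T *m x) ^+ 2.
Proof.
rewrite -scalemxAr -scalemxAl scZ; congr (_ * _).
by rewrite !mulmxA -(mulmxA _ _ x) (scM (x^T *m d)) dotC expr2.
Qed.

Lemma quadS m (w : 'cV[R]_m) p q :
  sc R (w^T *m Spq R m p q *m w) = 2 * (w p 0 * w q 0).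
Proof.
rewrite /Spq mulmxDr mulmxDl scD !mulmxA -!(mulmxA _ _ w) !scM.
rewrite !(dotC w) !dotE; ring.
Qed.

End Aux.

Theorem theorem4 (R : realFieldType) (n : nat) (hn : (1 <= n)%N)
  (E : 'M[R]_n) (hE : posdef R n E) (alpha : R) (halpha : 0 < alpha)
  (p q : 'I_(zdim n)) (i j k : 'I_n) (hjk : j != k)
  (hpq : zpoly R n p * zpoly R n q = 'X_i ^+ 2 * 'X_j * 'X_k) :
  forall x : 'cV[R]_n, sc R (x^T *m E *m x) <= alpha ^+ 2 ->
  let w := zmap R n x in
  let dp := ebasis R n j + ebasis R n k in
  let dm := ebasis R n j - ebasis R n k in
  [/\ 0 <= qc R n (zdim n) x w alpha (W1 R n E i dp) (- Spq R (zdim n) p q),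
      0 <= qc R n (zdim n) x w alpha (W2 R n E i dp) (- Spq R (zdim n) p q),
      0 <= qc R n (zdim n) x w alpha (W1 R n E i dm) (Spq R (zdim n) p q)
    & 0 <= qc R n (zdim n) x w alpha (W2 R n E i dm) (Spq R (zdim n) p q)].
Proof.
move=> x hx w dp dm.
have hw : w p 0 * w q 0 = x i 0 ^+ 2 * x j 0 * x k 0.
  have := congr1 (meval (fun l => x l 0)) hpq.
  rewrite /w !mxE -mevalM => ->; by rewrite !rmorphM /= !mevalXU expr2.
have SN : forall (S : 'M[R]_(zdim n)), sc R (w^T *m - S *m w) = - sc R (w^T *m S *m w).
  by move=> S; rewrite mulmxN mulNmx scN.
have [ci1 ci2] := CS_ell alpha x (ebasis R n i) hE hx.
have [cp1 cp2] := CS_ell alpha x (dp) hE hx.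
have [cm1 cm2] := CS_ell alpha x (dm) hE hx.
rewrite dotE in ci2.
have edp : sc R (dp^T *m x) = x j 0 + x k 0.
  by rewrite /dp linearD /= mulmxDl scD !dotE.
have edm : sc R (dm^T *m x) = x j 0 - x k 0.
  by rewrite /dm linearB /= mulmxBl scD scN !dotE.
rewrite edp in cp2; rewrite edm in cm2.
rewrite /W1 /W2 !qcE !SN !quadW quadS hw !dotE edp edm.
set a2 := alpha ^+ 2 in ci2 cp2 cm2 *.
set Xi := x i 0 in ci2 *; set Xj := x j 0 in cp2 cm2 *; set Xk := x k 0 in cp2 cm2 *.
set ci := sc R _ in ci1 ci2 *.
set cp := sc R (dp^T *m _ *m _) in cp1 cp2 *.
set cm := sc R (dm^T *m _ *m _) in cm1 cm2 *.
have h1 : 0 <= (a2 * ci - Xi ^+ 2) * (Xj + Xk) ^+ 2.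
  by rewrite mulr_ge0 ?sqr_ge0 // subr_ge0.
have h2 : 0 <= (a2 * cp - (Xj + Xk) ^+ 2) * Xi ^+ 2.
  by rewrite mulr_ge0 ?sqr_ge0 // subr_ge0.
have h3 : 0 <= (a2 * ci - Xi ^+ 2) * (Xj - Xk) ^+ 2.
  by rewrite mulr_ge0 ?sqr_ge0 // subr_ge0.
have h4 : 0 <= (a2 * cm - (Xj - Xk) ^+ 2) * Xi ^+ 2.
  by rewrite mulr_ge0 ?sqr_ge0 // subr_ge0.
have h5 : 0 <= Xi ^+ 2 * (Xj ^+ 2 + Xk ^+ 2).
  by rewrite mulr_ge0 ?sqr_ge0 // addr_ge0 ?sqr_ge0.
split.
- have -> : a2 * (ci * (Xj + Xk) ^+ 2) + - (2 * (Xi ^+ 2 * Xj * Xk))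
    = (a2 * ci - Xi ^+ 2) * (Xj + Xk) ^+ 2 + Xi ^+ 2 * (Xj ^+ 2 + Xk ^+ 2) by ring.
  exact: addr_ge0.
- have -> : a2 * (cp * Xi ^+ 2) + - (2 * (Xi ^+ 2 * Xj * Xk))
    = (a2 * cp - (Xj + Xk) ^+ 2) * Xi ^+ 2 + Xi ^+ 2 * (Xj ^+ 2 + Xk ^+ 2) by ring.
  exact: addr_ge0.
- have -> : a2 * (ci * (Xj - Xk) ^+ 2) + 2 * (Xi ^+ 2 * Xj * Xk)
    = (a2 * ci - Xi ^+ 2) * (Xj - Xk) ^+ 2 + Xi ^+ 2 * (Xj ^+ 2 + Xk ^+ 2) by ring.
  exact: addr_ge0.
- have -> : a2 * (cm * Xi ^+ 2) + 2 * (Xi ^+ 2 * Xj * Xk)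
    = (a2 * cm - (Xj - Xk) ^+ 2) * Xi ^+ 2 + Xi ^+ 2 * (Xj ^+ 2 + Xk ^+ 2) by ring.
  exact: addr_ge0.
Qed.
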